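(* If $M$ is typable in $\lambda^{\triangleright}$ (i.e. $\Gamma\vdash^A M:\tau$ for some $\Gamma,A,\tau$), then there is no infinite reduction sequence $M\to N_1\to N_2\to\cdots$.
   Context: Calculus $\lambda^{\triangleright}$. Let $\mathcal{G}$ be a countably infinite set of transition variables $\alpha,\beta,\dots$. A transition (or stage) $A,B$ is a finite sequence of transition variables; $\varepsilon$ is the empty sequence and $AB$ is concatenation. Types: $\tau ::= b \mid \tau\to\tau \mid \triangleright_\alpha\tau \mid \forall\alpha.\tau$ ($b$ ranges over base types; $\alpha$ is bound in $\forall\alpha.\tau$). Terms: $M ::= x \mid M\,M \mid \lambda x{:}\tau.M \mid \blacktriangleright_\alpha M \mid \blacktriangleleft_\alpha M \mid \Lambda\alpha.M \mid M\,A$ (quotation, unquotation, transition abstraction, and instantiation by a transition $A$); $x$ is bound in $\lambda x{:}\tau.M$ and $\alpha$ in $\Lambda\alpha.M$; bound variables are tacitly renamed. For $A=\alpha_1\cdots\alpha_n$ write $\triangleright_A\tau=\triangleright_{\alpha_1}\cdots\triangleright_{\alpha_n}\tau$, $\blacktriangleright_A M=\blacktriangleright_{\alpha_1}\cdots\blacktriangleright_{\alpha_n}M$, and $\blacktriangleleft_A M=\blacktriangleleft_{\alpha_n}\cdots\blacktriangleleft_{\alpha_1}M$ (all three are the identity when $A=\varepsilon$). Capture-avoiding substitution $\tau[\alpha:=B]$, $M[\alpha:=B]$, $A[\alpha:=B]$ of a transition for a transition variable replaces $\alpha$ by $B$ in transitions and replaces $\triangleright_\alpha,\blacktriangleright_\alpha,\blacktriangleleft_\alpha$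 by $\triangleright_B,\blacktriangleright_B,\blacktriangleleft_B$ respectively. $M[x:=N]$ is capture-avoiding term substitution. $\mathrm{FTV}$ denotes free transition variables. A context $\Gamma$ is a finite set $\{x_1:\tau_1@A_1,\dots,x_n:\tau_n@A_n\}$ with distinct $x_i$; $\mathrm{FTV}(\Gamma)=\bigcup_i(\mathrm{FTV}(\tau_i)\cup\mathrm{FTV}(A_i))$. Typing judgments $\Gamma\vdash^A M:\tau$ are derived by: (Var) $x:\tau@A\in\Gamma \Rightarrow \Gamma\vdash^A x:\tau$; (Abs) $\Gamma,x:\tau@A\vdash^A M:\sigma \Rightarrow \Gamma\vdash^A\lambda x{:}\tau.M:\tau\to\sigma$; (App) $\Gamma\vdash^A M:\tau\to\sigma$ and $\Gamma\vdash^A N:\tau$ $\Rightarrow \Gamma\vdash^A M\,N:\sigma$; (Quote) $\Gamma\vdash^{A\alpha}M:\tau \Rightarrow \Gamma\vdash^A\blacktriangleright_\alpha M:\triangleright_\alpha\tau$; (Unquote) $\Gamma\vdash^A M:\triangleright_\alpha\tau \Rightarrow \Gamma\vdash^{A\alpha}\blacktriangleleft_\alpha M:\tau$; (Gen) $\Gamma\vdash^A M:\tau$ and $\alpha\notin\mathrm{FTV}(\Gamma)\cup\mathrm{FTV}(A)$ $\Rightarrow \Gamma\vdash^A\Lambda\alpha.M:\forall\alpha.\tau$; (Ins) $\Gamma\vdash^A M:\forall\alpha.\tau \Rightarrow \Gamma\vdash^A M\,B:\tau[\alpha:=B]$. Reduction $M\to N$ is the least relation closed under all term constructors (reduction may occur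 anywhere, including under binders and quotations) containing $(\lambda x{:}\tau.M)\,N\to M[x:=N]$, $\blacktriangleleft_\alpha\blacktriangleright_\alpha M\to M$, and $(\Lambda\alpha.M)\,A\to M[\alpha:=A]$. *)

(* Defs.v *)
(* Calculus lambda^triangleright with de Bruijn indices
   for both term variables and transition variables. *)
From Stdlib Require Import List Arith.
Import ListNotations.

Definition tvar := nat.
Definition trans := list tvar.

Inductive ty : Type :=
| TBase : nat -> ty
| TArr  : ty -> ty -> ty
| TQ    : tvar -> ty -> ty
| TAll  : ty -> ty.

Inductive tm : Type :=
| Var     : nat -> tm
| App     : tm -> tm -> tm
| Lam     : ty -> tm -> tm
| Quote   : tvar -> tm -> tm
| Unquote : tvar -> tm -> tm
| TLam    : tm -> tm                (* Lambda alpha. M (binds trans. index 0) *)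
| TApp    : tm -> trans -> tm.

Definition tsubst := tvar -> trans.

Definition tr_subst (s : tsubst) (A : trans) : trans := flat_map s A.

Definition up_t (s : tsubst) : tsubst :=
  fun n => match n with 0 => [0] | S m => map S (s m) end.

Definition tyQs (A : trans) (t : ty) : ty := fold_right TQ t A.
Definition tmQs (A : trans) (M : tm) : tm := fold_right Quote M A.
(* black <|_A M = <|_{an} ... <|_{a1} M *)
Definition tmUs (A : trans) (M : tm) : tm :=
  fold_left (fun N a => Unquote a N) A M.

Fixpoint ty_tsubst (s : tsubst) (t : ty) : ty :=
  match t with
  | TBase b => TBase b
  | TArr t1 t2 => TArr (ty_tsubst s t1) (ty_tsubst s t2)
  | TQ a t' => tyQs (s a) (ty_tsubst s t')
  | TAll t' => TAll (ty_tsubst (up_t s) t')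
  end.

Fixpoint tm_tsubst (s : tsubst) (M : tm) : tm :=
  match M with
  | Var x => Var x
  | App M1 M2 => App (tm_tsubst s M1) (tm_tsubst s M2)
  | Lam t M' => Lam (ty_tsubst s t) (tm_tsubst s M')
  | Quote a M' => tmQs (s a) (tm_tsubst s M')
  | Unquote a M' => tmUs (s a) (tm_tsubst s M')
  | TLam M' => TLam (tm_tsubst (up_t s) M')
  | TApp M' A => TApp (tm_tsubst s M') (tr_subst s A)
  end.

Definition tshift_s : tsubst := fun n => [S n].
Definition tinst (B : trans) : tsubst :=
  fun n => match n with 0 => B | S m => [m] end.

Fixpoint tm_ren (r : nat -> nat) (M : tm) : tm :=
  match M with
  | Var x => Var (r x)
  | App M1 M2 => App (tm_ren r M1) (tm_ren r M2)
  | Lam t M' => Lam t (tm_ren (fun n => match n with 0 => 0 | S m => S (r m) end) M')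
  | Quote a M' => Quote a (tm_ren r M')
  | Unquote a M' => Unquote a (tm_ren r M')
  | TLam M' => TLam (tm_ren r M')
  | TApp M' A => TApp (tm_ren r M') A
  end.

Definition up_s (s : nat -> tm) : nat -> tm :=
  fun n => match n with 0 => Var 0 | S m => tm_ren S (s m) end.

Fixpoint tm_subst (s : nat -> tm) (M : tm) : tm :=
  match M with
  | Var x => s x
  | App M1 M2 => App (tm_subst s M1) (tm_subst s M2)
  | Lam t M' => Lam t (tm_subst (up_s s) M')
  | Quote a M' => Quote a (tm_subst s M')
  | Unquote a M' => Unquote a (tm_subst s M')
  | TLam M' => TLam (tm_subst (fun x => tm_tsubst tshift_s (s x)) M')
  | TApp M' A => TApp (tm_subst s M') A
  end.

Definition sinst (N : tm) : nat -> tm :=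
  fun n => match n with 0 => N | S m => Var m end.

(* contexts: term variable i has type and stage (nth i) *)
Definition ctx := list (ty * trans).

Definition ctx_tshift (G : ctx) : ctx :=
  map (fun p => (ty_tsubst tshift_s (fst p), tr_subst tshift_s (snd p))) G.

Inductive has_type : ctx -> trans -> tm -> ty -> Prop :=
| T_Var : forall G A x t,
    nth_error G x = Some (t, A) -> has_type G A (Var x) t
| T_Abs : forall G A t M s,
    has_type ((t, A) :: G) A M s -> has_type G A (Lam t M) (TArr t s)
| T_App : forall G A M N t s,
    has_type G A M (TArr t s) -> has_type G A N t -> has_type G A (App M N) s
| T_Quote : forall G A a M t,
    has_type G (A ++ [a]) M t -> has_type G A (Quote a M) (TQ a t)
| T_Unquote : forall G A a M t,
    has_type G A M (TQ a t) -> has_type G (A ++ [a]) (Unquote a M) t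
| T_Gen : forall G A M t,
    (* fresh alpha = index 0; the context and stage are shifted *)
    has_type (ctx_tshift G) (tr_subst tshift_s A) M t ->
    has_type G A (TLam M) (TAll t)
| T_Ins : forall G A M t B,
    has_type G A M (TAll t) -> has_type G A (TApp M B) (ty_tsubst (tinst B) t).

Inductive step : tm -> tm -> Prop :=
| S_Beta : forall t M N, step (App (Lam t M) N) (tm_subst (sinst N) M)
| S_QU : forall a M, step (Unquote a (Quote a M)) M
| S_TBeta : forall M A, step (TApp (TLam M) A) (tm_tsubst (tinst A) M)
| S_App1 : forall M M' N, step M M' -> step (App M N) (App M' N)
| S_App2 : forall M N N', step N N' -> step (App M N) (App M N')
| S_Lam : forall t M M', step M M' -> step (Lam t M) (Lam t M')
| S_Quote : forall a M M', step M M' -> step (Quote a M) (Quote a M')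
| S_Unquote : forall a M M', step M M' -> step (Unquote a M) (Unquote a M')
| S_TLam : forall M M', step M M' -> step (TLam M) (TLam M')
| S_TApp : forall M M' A, step M M' -> step (TApp M A) (TApp M' A).

(* Main.v *)
Require Import Defs.
From Stdlib Require Import List Arith Lia FunctionalExtensionality.
Import ListNotations.

Inductive et : Type :=
| EV : nat -> et
| EA : et -> et -> et
| EL : et -> et.

Inductive sty : Type := SB | SArr : sty -> sty -> sty.

Definition upr (r : nat -> nat) : nat -> nat :=
  fun n => match n with 0 => 0 | S m => S (r m) end.

Fixpoint eren (r : nat -> nat) (e : et) : et :=
  match e with
  | EV x => EV (r x)
  | EA a b => EA (eren r a) (eren r b)
  | EL a => EL (eren (upr r) a)
  end.

Definition upe (s : nat -> et) : nat -> et :=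
  fun n => match n with 0 => EV 0 | S m => eren S (s m) end.

Fixpoint esubst (s : nat -> et) (e : et) : et :=
  match e with
  | EV x => s x
  | EA a b => EA (esubst s a) (esubst s b)
  | EL a => EL (esubst (upe s) a)
  end.

Definition esinst (u : et) : nat -> et :=
  fun n => match n with 0 => u | S m => EV m end.

Inductive estep : et -> et -> Prop :=
| E_Beta : forall e u, estep (EA (EL e) u) (esubst (esinst u) e)
| E_App1 : forall a a' b, estep a a' -> estep (EA a b) (EA a' b)
| E_App2 : forall a b b', estep b b' -> estep (EA a b) (EA a b')
| E_Lam : forall a a', estep a a' -> estep (EL a) (EL a').

Inductive ehas : list sty -> et -> sty -> Prop :=
| H_Var : forall G x T, nth_error G x = Some T -> ehas G (EV x) T
| H_Lam : forall G e A B, ehas (A :: G) e B -> ehas G (EL e) (SArr A B)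
| H_App : forall G a b A B, ehas G a (SArr A B) -> ehas G b A -> ehas G (EA a b) B.

Lemma eren_ren : forall e r r', eren r (eren r' e) = eren (fun n => r (r' n)) e.
Proof.
  induction e; intros; simpl; f_equal; auto.
  rewrite IHe. f_equal. extensionality n. destruct n; reflexivity.
Qed.

Lemma esubst_ren : forall e s r, esubst s (eren r e) = esubst (fun n => s (r n)) e.
Proof.
  induction e; intros; simpl; f_equal; auto.
  rewrite IHe. f_equal. extensionality n. destruct n; reflexivity.
Qed.

Lemma eren_subst : forall e s r, eren r (esubst s e) = esubst (fun n => eren r (s n)) e.
Proof.
  induction e; intros; simpl; f_equal; auto.
  rewrite IHe. f_equal. extensionality n. destruct n; simpl; auto.
  rewrite !eren_ren. reflexivity.
Qed.

Lemma esubst_subst : forall e s t,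
  esubst t (esubst s e) = esubst (fun n => esubst t (s n)) e.
Proof.
  induction e; intros; simpl; f_equal; auto.
  rewrite IHe. f_equal. extensionality n. destruct n; simpl; auto.
  rewrite esubst_ren, eren_subst. reflexivity.
Qed.

Lemma esubst_id : forall e, esubst EV e = e.
Proof.
  induction e; simpl; f_equal; auto.
  replace (upe EV) with EV; auto.
  extensionality n; destruct n; reflexivity.
Qed.

Lemma estep_subst : forall e e', estep e e' -> forall s, estep (esubst s e) (esubst s e').
Proof.
  induction 1; intros; simpl; try (constructor; auto; fail).
  replace (esubst s (esubst (esinst u) e)) with
    (esubst (esinst (esubst s u)) (esubst (upe s) e)) by
    (rewrite !esubst_subst; f_equal; extensionality n; destruct n; simpl; auto;
     rewrite esubst_ren; simpl; apply esubst_id).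
  constructor.
Qed.

Definition SN := Acc (fun y x => estep x y).

Lemma SN_subst : forall s e, SN (esubst s e) -> SN e.
Proof.
  intros s e H. remember (esubst s e) as E. revert e HeqE.
  induction H; intros; subst. constructor; intros.
  eapply H0; [apply estep_subst; eauto| reflexivity].
Qed.

Lemma SN_app : forall a b, SN (EA a b) -> SN a.
Proof.
  intros a b H. remember (EA a b) as E. revert a b HeqE.
  induction H; intros; subst. constructor; intros.
  eapply H0; [apply E_App1; eauto| reflexivity].
Qed.

Fixpoint Red (T : sty) (e : et) : Prop :=
  match T with
  | SB => SN e
  | SArr A B => forall u, Red A u -> Red B (EA e u)
  end.

Definition neutral (e : et) := match e with EL _ => False | _ => True end.

Lemma CR : forall T,
  (forall e, Red T e -> SN e) /\
  (forall e e', Red T e -> estep e e' -> Red T e') /\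
  (forall e, neutral e -> (forall e', estep e e' -> Red T e') -> Red T e).
Proof.
  induction T as [|A [IA1 [IA2 IA3]] B [IB1 [IB2 IB3]]].
  - simpl. split; [|split]; auto.
    + intros e e' H Hs. destruct H. apply H; auto.
    + intros. constructor. auto.
  - simpl. split; [|split].
    + intros e H.
      assert (Hv : Red A (EV 0)) by (apply IA3; [exact I| intros e0 Hs0; inversion Hs0]).
      apply SN_app with (EV 0). apply IB1. apply H, Hv.
    + intros e e' H Hs u Hu. apply IB2 with (EA e u). apply H, Hu. apply E_App1, Hs.
    + intros e Hn Hr u Hu.
      assert (Hsn : SN u) by auto.
      induction Hsn as [u _ IHu].
      apply IB3; simpl; auto.
      intros e' Hs. inversion Hs; subst.
      * simpl in Hn. contradiction.
      * apply Hr; auto.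
      * apply IHu; auto. eapply IA2; eauto.
Qed.

Lemma CR1 : forall T e, Red T e -> SN e. Proof. intro T; apply (CR T). Qed.
Lemma CR2 : forall T e e', Red T e -> estep e e' -> Red T e'. Proof. intro T; apply (CR T). Qed.
Lemma CR3 : forall T e, neutral e -> (forall e', estep e e' -> Red T e') -> Red T e.
Proof. intro T; apply (CR T). Qed.

Lemma var_red : forall T x, Red T (EV x).
Proof. intros. apply CR3; simpl; auto. intros e' H; inversion H. Qed.

Lemma lam_red : forall A B e,
  (forall u, Red A u -> Red B (esubst (esinst u) e)) -> Red (SArr A B) (EL e).
Proof.
  intros A B e H. simpl. intros u Hu.
  assert (He : SN e).
  { apply SN_subst with (esinst (EV 0)). apply CR1 with B. apply H, var_red. }
  revert u Hu. induction He as [e _ IHe]. intros u Hu.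
  assert (Hsn : SN u) by (eapply CR1; eauto).
  induction Hsn as [u _ IHu].
  apply CR3; simpl; auto. intros e' Hs. inversion Hs; subst.
  - apply H; auto.
  - inversion H3; subst. apply IHe; auto.
    intros v Hv. eapply CR2; [apply H, Hv | apply estep_subst; auto].
  - apply IHu; auto. eapply CR2; eauto.
Qed.

Lemma fundamental : forall G e T, ehas G e T ->
  forall s, (forall i T', nth_error G i = Some T' -> Red T' (s i)) -> Red T (esubst s e).
Proof.
  induction 1; intros s Hs; simpl.
  - apply Hs; auto.
  - apply lam_red. intros u Hu.
    rewrite esubst_subst.
    replace (fun n => esubst (esinst u) (upe s n)) with
      (fun n => match n with 0 => u | S m => s m end).
    + apply IHehas. intros [|i] T' Hi; simpl in Hi.
      * inversion Hi; subst; auto.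
      * apply Hs; auto.
    + extensionality n. destruct n; simpl; auto.
      rewrite esubst_ren. simpl. symmetry; apply esubst_id.
  - apply (IHehas1 s Hs). apply IHehas2; auto.
Qed.

Lemma typed_SN : forall G e T, ehas G e T -> SN e.
Proof.
  intros. apply CR1 with T. rewrite <- esubst_id.
  eapply fundamental; eauto. intros; apply var_red.
Qed.

Fixpoint ety (t : ty) : sty :=
  match t with
  | TBase _ => SB
  | TArr a b => SArr (ety a) (ety b)
  | TQ _ a => ety a
  | TAll a => ety a
  end.

Fixpoint erase (M : tm) : et :=
  match M with
  | Var x => EV x
  | App a b => EA (erase a) (erase b)
  | Lam _ a => EL (erase a)
  | Quote _ a => erase a
  | Unquote _ a => erase a
  | TLam a => erase a
  | TApp a _ => erase a
  end.

Lemma ety_Qs : forall A t, ety (tyQs A t) = ety t.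
Proof. induction A; simpl; auto. Qed.

Lemma ety_tsubst : forall t s, ety (ty_tsubst s t) = ety t.
Proof.
  induction t; intros; simpl; auto.
  - rewrite IHt1, IHt2; auto.
  - rewrite ety_Qs; auto.
Qed.

Lemma erase_Qs : forall A M, erase (tmQs A M) = erase M.
Proof. induction A; simpl; auto. Qed.

Lemma erase_Us : forall A M, erase (tmUs A M) = erase M.
Proof.
  unfold tmUs. induction A; intros; simpl; auto. rewrite IHA. reflexivity.
Qed.

Lemma erase_tsubst : forall M s, erase (tm_tsubst s M) = erase M.
Proof.
  induction M; intros; simpl; auto.
  - rewrite IHM1, IHM2; auto.
  - rewrite IHM; auto.
  - rewrite erase_Qs; auto.
  - rewrite erase_Us; auto.
Qed.

Lemma erase_ren : forall M r, erase (tm_ren r M) = eren r (erase M).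
Proof.
  induction M; intros; simpl; auto.
  - rewrite IHM1, IHM2; auto.
  - rewrite IHM. reflexivity.
Qed.

Lemma erase_subst : forall M s, erase (tm_subst s M) = esubst (fun x => erase (s x)) (erase M).
Proof.
  induction M; intros; simpl; auto.
  - rewrite IHM1, IHM2; auto.
  - rewrite IHM. f_equal. f_equal. extensionality n. destruct n; simpl; auto.
    apply erase_ren.
  - rewrite IHM. f_equal. extensionality n. apply erase_tsubst.
Qed.

Lemma erase_typed : forall G A M t, has_type G A M t ->
  ehas (map (fun p => ety (fst p)) G) (erase M) (ety t).
Proof.
  induction 1; simpl.
  - constructor. erewrite map_nth_error; eauto. reflexivity.
  - constructor. auto.
  - econstructor; eauto.
  - auto.
  - auto.
  - unfold ctx_tshift in IHhas_type. rewrite map_map in IHhas_type.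
    simpl in IHhas_type.
    replace (map (fun p => ety (fst p)) G) with
      (map (fun x : ty * trans => ety (ty_tsubst tshift_s (fst x))) G); auto.
    apply map_ext. intros. apply ety_tsubst.
  - rewrite ety_tsubst. auto.
Qed.

Fixpoint nTL (M : tm) : nat :=
  match M with
  | Var _ => 0
  | App a b => nTL a + nTL b
  | Lam _ a => nTL a
  | Quote _ a => nTL a
  | Unquote _ a => nTL a
  | TLam a => S (nTL a)
  | TApp a _ => nTL a
  end.

Fixpoint sz (M : tm) : nat :=
  match M with
  | Var _ => 1
  | App a b => S (sz a + sz b)
  | Lam _ a => S (sz a)
  | Quote _ a => S (sz a)
  | Unquote _ a => S (sz a)
  | TLam a => S (sz a)
  | TApp a _ => S (sz a)
  end.

Lemma nTL_Qs : forall A M, nTL (tmQs A M) = nTL M.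
Proof. induction A; simpl; auto. Qed.
Lemma nTL_Us : forall A M, nTL (tmUs A M) = nTL M.
Proof. unfold tmUs. induction A; intros; simpl; auto. rewrite IHA. reflexivity. Qed.
Lemma nTL_tsubst : forall M s, nTL (tm_tsubst s M) = nTL M.
Proof.
  induction M; intros; simpl; auto.
  - rewrite nTL_Qs; auto.
  - rewrite nTL_Us; auto.
Qed.

Definition lexR (p q : nat * nat) : Prop :=
  fst p < fst q \/ (fst p = fst q /\ snd p < snd q).

Lemma lex_acc : forall a b, Acc lexR (a, b).
Proof.
  induction a as [a IHa] using lt_wf_ind.
  induction b as [b IHb] using lt_wf_ind.
  constructor. intros [a' b'] [H|[H1 H2]]; simpl in *.
  - apply IHa; auto.
  - subst. apply IHb; auto.
Qed.

Definition mu M := (nTL M, sz M).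

Lemma step_sim : forall M N, step M N ->
  estep (erase M) (erase N) \/ (erase M = erase N /\ lexR (mu N) (mu M)).
Proof.
  unfold lexR, mu; induction 1; simpl.
  - left. rewrite erase_subst.
    replace (fun x => erase (sinst N x)) with (esinst (erase N)).
    + constructor.
    + extensionality n; destruct n; reflexivity.
  - right. split; [auto|]. right. lia.
  - right. rewrite erase_tsubst, nTL_tsubst. split; [auto|]. left. lia.
  - destruct IHstep as [H1|[H1 H2]]; [left; constructor; auto|right].
    rewrite H1. split; [auto|]. simpl in H2. lia.
  - destruct IHstep as [H1|[H1 H2]]; [left; constructor; auto|right].
    rewrite H1. split; [auto|]. simpl in H2. lia.
  - destruct IHstep as [H1|[H1 H2]]; [left; constructor; auto|right].
    rewrite H1. split; [auto|]. simpl in H2. lia.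
  - destruct IHstep as [H1|[H1 H2]]; [left; auto|right].
    split; [auto|]. simpl in H2. lia.
  - destruct IHstep as [H1|[H1 H2]]; [left; auto|right].
    split; [auto|]. simpl in H2. lia.
  - destruct IHstep as [H1|[H1 H2]]; [left; auto|right].
    split; [auto|]. simpl in H2. lia.
  - destruct IHstep as [H1|[H1 H2]]; [left; auto|right].
    split; [auto|]. simpl in H2. lia.
Qed.

Lemma no_inf : forall e, SN e -> forall p, Acc lexR p ->
  forall f : nat -> tm, erase (f 0) = e -> mu (f 0) = p ->
  (forall n, step (f n) (f (S n))) -> False.
Proof.
  intros e He. induction He as [e _ IHe].
  intros p Hp. induction Hp as [p _ IHp].
  intros f H0 H1 Hs.
  destruct (step_sim _ _ (Hs 0)) as [H|[H H']].
  - apply (IHe (erase (f 1))) with (mu (f 1)) (fun n => f (S n)); auto.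
    + subst; auto.
    + destruct (mu (f 1)); apply lex_acc.
  - apply (IHp (mu (f 1))) with (fun n => f (S n)); auto.
    + subst; auto.
    + congruence.
Qed.

Theorem mainTheorem3 (G : ctx) (A : trans) (M : tm) (t : ty) :
  has_type G A M t ->
  ~ (exists f : nat -> tm, f 0 = M /\ forall n, step (f n) (f (S n))).
Proof.
  intros Ht [f [Hf Hs]].
  pose proof (typed_SN _ _ _ (erase_typed _ _ _ _ Ht)) as Hsn.
  apply (no_inf (erase M) Hsn (mu M)) with f; subst; auto.
  unfold mu. apply lex_acc.
Qed.
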